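(* For all integers $n,m\ge 2$, the number $a(n,m,\Gamma_{gs})$ of group-separable $(n,m)$-elections on the candidate set $\{c_1,\ldots,c_m\}$ satisfies $a(n,m,\Gamma_{gs})\le m!\cdot(3+2\sqrt 2)^{m(n-1)}$.
   Context: An $(n,m)$-election $(C,\mathcal{P})$ is a set $C$ of $m$ candidates with an ordered $n$-tuple $\mathcal{P}=(V_1,\ldots,V_n)$ of total orders (votes) on $C$. The election is group-separable if for every subset $C'\subseteq C$ with $|C'|\ge 2$ there exists a partition of $C'$ into two nonempty sets $C_1,C_2$ such that in every vote either all candidates of $C_1$ are ranked above all candidates of $C_2$, or all candidates of $C_2$ are ranked above all candidates of $C_1$. *)

(* Defs.v *)
From HB Require Import structures.
From mathcomp Require Import all_boot all_order all_algebra all_fingroup.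
Set Implicit Arguments. Unset Strict Implicit. Unset Printing Implicit Defensive.

(* A vote (total order on the
   candidates) is represented by a permutation v : {perm 'I_m} sending each
   candidate to its position (0 = top); this is a bijection between total
   orders on 'I_m and permutations. *)
Definition vote (m : nat) := {perm 'I_m}.

Definition election (n m : nat) := {ffun 'I_n -> vote m}.

Definition above (m : nat) (v : vote m) (a b : 'I_m) : bool := (v a < v b)%N.

Definition all_above (m : nat) (v : vote m) (C1 C2 : {set 'I_m}) : bool :=
  [forall a in C1, forall b in C2, above v a b].

Definition group_separable (n m : nat) (P : election n m) : bool :=
  [forall C' : {set 'I_m}, (1 < #|C'|)%N ==>
     [exists C1 : {set 'I_m},
        [&& C1 \subset C', C1 != set0, C' :\: C1 != set0 &
            [forall i : 'I_n,
               all_above (P i) C1 (C' :\: C1) || all_above (P i) (C' :\: C1) C1]]]].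

Definition num_gs (n m : nat) : nat := #|[set P : election n m | group_separable P]|.

(* Main.v *)
Require Import Defs.
From HB Require Import structures.
From mathcomp Require Import all_boot all_order all_algebra all_fingroup.
From Stdlib Require Import ClassicalEpsilon.
From mathcomp Require Import zify ring lra.
Set Implicit Arguments. Unset Strict Implicit. Unset Printing Implicit Defensive.

Section SepTheory.
Variable T : eqType.
Implicit Types l r s : seq T.

Inductive Sep : seq T -> seq T -> Prop :=
| SepB l : size l <= 1 -> Sep l l
| SepP l r k : 0 < k < size l -> Sep (take k l) (take k r) -> Sep (drop k l) (drop k r) -> Sep l r
| SepQ l r k : 0 < k < size l -> Sep (take k l) (drop (size l - k) r) ->
     Sep (drop k l) (take (size l - k) r) -> Sep l r.

Lemma Sep_perm l r : Sep l r -> perm_eq l r.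
Proof.
elim=> {l r} [l _ | l r k _ _ H1 _ H2 | l r k _ _ H1 _ H2].
- exact: perm_refl.
- apply: (@perm_trans _ (take k l ++ drop k l)); first by rewrite cat_take_drop.
  apply: (@perm_trans _ (take k r ++ drop k r)); first exact: perm_cat.
  by rewrite cat_take_drop.
- apply: (@perm_trans _ (take k l ++ drop k l)); first by rewrite cat_take_drop.
  apply: (@perm_trans _ (drop (size l - k) r ++ take (size l - k) r)); first exact: perm_cat.
  by rewrite perm_catC cat_take_drop.
Qed.

Definition sepb l r : bool := if excluded_middle_informative (Sep l r) then true else false.
Lemma sepbP l r : reflect (Sep l r) (sepb l r).
Proof. rewrite /sepb; case: excluded_middle_informative => h; by constructor. Qed.

Definition splP l r k := [&& 0 < k < size l, sepb (take k l) (take k r) & sepb (drop k l) (drop k r)].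
Definition splQ l r k := [&& 0 < k < size l, sepb (take k l) (drop (size l - k) r) &
   sepb (drop k l) (take (size l - k) r)].
Definition hasSP l r := has (splP l r) (iota 0 (size l)).
Definition hasSQ l r := has (splQ l r) (iota 0 (size l)).

Lemma Sep_split l r : Sep l r -> 1 < size l -> hasSP l r || hasSQ l r.
Proof.
case=> {l r} [l hl | l r k hk h1 h2 | l r k hk h1 h2] hs.
- by rewrite ltnNge hl in hs.
- apply/orP; left; apply/hasP; exists k; first by rewrite mem_iota add0n; case/andP: hk.
  by rewrite /splP hk /=; apply/andP; split; apply/sepbP.
- apply/orP; right; apply/hasP; exists k; first by rewrite mem_iota add0n; case/andP: hk.
  by rewrite /splQ hk /=; apply/andP; split; apply/sepbP.
Qed.

Lemma in_drop_uniq s i x : uniq s -> x \in s -> (x \in drop i s) = (x \notin take i s).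
Proof.
move=> u xs.
have dis : ~~ has (mem (take i s)) (drop i s).
  by move: u; rewrite -{1}(cat_take_drop i s) cat_uniq => /and3P[].
have : x \in take i s ++ drop i s by rewrite cat_take_drop.
rewrite mem_cat => /orP[xt | xd].
- rewrite xt /=; apply/negP => xd; move/negP: dis; apply; apply/hasP; by exists x.
- rewrite xd; apply/esym/negP => xt; move/negP: dis; apply; apply/hasP; by exists x.
Qed.

Lemma splPQ_excl l r k j : uniq l -> splP l r k -> splQ l r j -> False.
Proof.
move=> ul /and3P[/andP[k0 ks] /sepbP h1 /sepbP h1'] /and3P[/andP[j0 js] /sepbP h2 _].
have p1 := Sep_perm h1; have p1' := Sep_perm h1'; have p2 := Sep_perm h2.
have pr : perm_eq l r.
  apply: (@perm_trans _ (take k l ++ drop k l)); first by rewrite cat_take_drop.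
  apply: (@perm_trans _ (take k r ++ drop k r)); first exact: perm_cat.
  by rewrite cat_take_drop.
have ur : uniq r by rewrite -(perm_uniq pr).
have sl : 0 < size l by lia.
have [x0 _] : exists x0 : T, True by case: (l) sl => [|y] //; exists y.
pose a := nth x0 l 0; pose b := nth x0 l (size l).-1.
have al : a \in l by apply: mem_nth.
have bl : b \in l by apply: mem_nth; lia.
have ia : index a l = 0 by apply: index_uniq.
have ib : index b l = (size l).-1 by apply: index_uniq => //; lia.
have ar : a \in r by rewrite -(perm_mem pr).
have br : b \in r by rewrite -(perm_mem pr).
have atk : a \in take k r by rewrite -(perm_mem p1) in_take // ia.
have atj : a \in drop (size l - j) r by rewrite -(perm_mem p2) in_take // ia.
have btk : b \notin take k r by rewrite -(perm_mem p1) in_take // ib -leqNgt; lia.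
have btj : b \notin drop (size l - j) r by rewrite -(perm_mem p2) in_take // ib -leqNgt; lia.
rewrite in_take // in atk; rewrite in_take // -leqNgt in btk.
rewrite in_drop_uniq // in_take // -leqNgt in atj.
rewrite in_drop_uniq // in_take // negbK in btj.
lia.
Qed.

Lemma splP_min l r k j : k < size l -> splP (take k l) (take k r) j ->
  sepb (drop k l) (drop k r) -> splP l r j.
Proof.
move=> ks /and3P[/andP[j0 jk] /sepbP h1 /sepbP h2] /sepbP h3.
rewrite size_take ks in jk.
rewrite !take_takel ?(ltnW jk) // in h1.
apply/and3P; split; first by apply/andP; split => //; lia.
- exact/sepbP.
apply/sepbP; apply: (@SepP _ _ (k - j)).
- rewrite size_drop; lia.
- by rewrite !take_drop subnK ?(ltnW jk).
- by rewrite !drop_drop subnK ?(ltnW jk).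
Qed.

Lemma splQ_min l r k j : k < size l -> splQ (take k l) (drop (size l - k) r) j ->
  sepb (drop k l) (take (size l - k) r) -> splQ l r j.
Proof.
set s := size l => ks /and3P[/andP[j0 jk] /sepbP h1 /sepbP h2] /sepbP h3.
rewrite size_take ks in jk h1 h2.
rewrite !take_takel ?(ltnW jk) // drop_drop in h1.
have e : k - j + (s - k) = s - j by lia.
rewrite e in h1.
apply/and3P; split; first by apply/andP; split => //; lia.
- exact/sepbP.
apply/sepbP; apply: (@SepQ _ _ (k - j)).
- rewrite size_drop; lia.
- rewrite size_drop take_drop subnK ?(ltnW jk) //.
  have -> : s - j - (k - j) = s - k by lia.
  by rewrite take_drop e in h2.
- rewrite size_drop drop_drop subnK ?(ltnW jk) //.
  have -> : s - j - (k - j) = s - k by lia.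
  by rewrite take_takel //; lia.
Qed.

Definition S l := [seq r <- permutations l | sepb l r].
Definition U l := flatten [seq
   [seq a ++ b | a <- [seq A <- S (take k l) | ~~ hasSP (take k l) A], b <- S (drop k l)] ++
   [seq b ++ a | a <- [seq A <- S (take k l) | ~~ hasSQ (take k l) A], b <- S (drop k l)]
   | k <- iota 1 (size l - 1)].

Lemma mem_S l r : (r \in S l) = sepb l r.
Proof.
rewrite mem_filter mem_permutations; case: sepbP => //= h.
by rewrite perm_sym (Sep_perm h).
Qed.

Lemma S_uniq l : uniq (S l).
Proof. exact: filter_uniq (permutations_uniq l). Qed.

Lemma size_S_le l : uniq l -> size (S l) <= (size l)`!.
Proof. move=> ul; rewrite size_filter -(size_permutations ul); exact: count_size. Qed.

Lemma S_sub l : 1 < size l -> {subset S l <= U l}.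
Proof.
move=> sl r; rewrite mem_S => /sepbP hs.
apply/flattenP.
case/orP: (Sep_split hs sl) => [/hasP[k0 _ hk0] | /hasP[k0 _ hk0]].
- have ex : exists k, splP l r k by exists k0.
  case: (ex_minnP ex) => k hk kmin.
  have /and3P[/andP[k0' ks] h1 h2] := hk.
  eexists; first by apply/mapP; exists k => //; rewrite mem_iota; lia.
  rewrite mem_cat; apply/orP; left; apply/allpairsP; exists (take k r, drop k r); split => /=;
    last by rewrite cat_take_drop.
  + rewrite mem_filter mem_S h1 andbT; apply/hasP => -[j _ hj].
    have := kmin j (splP_min ks hj h2).
    have /and3P[/andP[_ ]] := hj; rewrite size_take ks; lia.
  + by rewrite mem_S.
- have ex : exists k, splQ l r k by exists k0.
  case: (ex_minnP ex) => k hk kmin.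
  have /and3P[/andP[k0' ks] h1 h2] := hk.
  eexists; first by apply/mapP; exists k => //; rewrite mem_iota; lia.
  rewrite mem_cat; apply/orP; right; apply/allpairsP;
    exists (drop (size l - k) r, take (size l - k) r); split => /=;
    last by rewrite cat_take_drop.
  + rewrite mem_filter mem_S h1 andbT; apply/hasP => -[j _ hj].
    have := kmin j (splQ_min ks hj h2).
    have /and3P[/andP[_ ]] := hj; rewrite size_take ks; lia.
  + by rewrite mem_S.
Qed.

Lemma count_split x : uniq x -> 1 < size x ->
  size [seq A <- S x | ~~ hasSP x A] + size [seq A <- S x | ~~ hasSQ x A] = size (S x).
Proof.
move=> ux sx; rewrite !(size_filter _ (S x)).
have e : count (fun A => ~~ hasSQ x A) (S x) = count (fun A => hasSP x A) (S x).
  apply: eq_in_count => A; rewrite mem_S => /sepbP hA.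
  case/orP: (Sep_split hA sx) => h.
  - rewrite h; apply/negP => /hasP[j _ hj]; move/hasP: h => [k _ hk].
    exact: splPQ_excl ux hk hj.
  - rewrite h /=; apply/esym/negP => /hasP[k _ hk]; move/hasP: h => [j _ hj].
    exact: splPQ_excl ux hk hj.
by rewrite e addnC -(count_predC (hasSP x)); congr (_ + _); apply: eq_count => A.
Qed.

End SepTheory.

Lemma size_flatten_le (X : Type) (ks : seq nat) (F : nat -> seq X) (B : nat -> nat) :
  (forall k, k \in ks -> size (F k) <= B k) ->
  size (flatten [seq F k | k <- ks]) <= \sum_(k <- ks) B k.
Proof.
elim: ks => [|k ks IH] h; first by rewrite big_nil.
rewrite /= size_cat big_cons leq_add //; first by apply: h; rewrite inE eqxx.
by apply: IH => k' hk'; apply: h; rewrite inE hk' orbT.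
Qed.

Fixpoint gf (f m : nat) : nat :=
  match f with
  | 0 => 1
  | f'.+1 => if m <= 1 then 1 else \sum_(1 <= k < m) (gf f' k + (k == 1)) * gf f' (m - k)
  end.
Definition g m := gf m m.

Lemma gf_stable f f' m : m <= f -> m <= f' -> gf f m = gf f' m.
Proof.
elim: f f' m => [|f IH] f' m hf hf'.
- by move: hf; rewrite leqn0 => /eqP ->; case: f' hf'.
- case: f' hf' => [|f'] hf'; first by move: hf'; rewrite leqn0 => /eqP ->.
  rewrite /=; case: ifP => // hm.
  apply: eq_big_nat => k /andP[k1 km].
  rewrite (IH f' k) ?(IH f' (m - k)) //; lia.
Qed.

Lemma g_rec m : 1 < m -> g m = \sum_(1 <= k < m) (g k + (k == 1)) * g (m - k).
Proof.
case: m => // m hm; rewrite /g /= ifN; last by rewrite -ltnNge.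
apply: eq_big_nat => k /andP[k1 km].
rewrite (@gf_stable m k k) ?(@gf_stable m (m.+1 - k) (m.+1 - k)) //; lia.
Qed.

Lemma g_small m : m <= 1 -> g m = 1.
Proof. by case: m => [|[|]]. Qed.

Lemma S_bound (T : eqType) (l : seq T) : uniq l -> size (S l) <= g (size l).
Proof.
move: {2}(size l) (leqnn (size l)) => N; elim: N l => [|N IH] l hN ul;
  case: (leqP (size l) 1) => hs.
- by rewrite g_small //; apply: leq_trans (size_S_le ul) _; case: (size l) hs => [|[|]].
- lia.
- by rewrite g_small //; apply: leq_trans (size_S_le ul) _; case: (size l) hs => [|[|]].
apply: (leq_trans (uniq_leq_size (S_uniq l) (S_sub hs))).
rewrite g_rec // /U; apply: size_flatten_le => k; rewrite mem_iota => hk.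
rewrite size_cat !size_allpairs -mulnDl; apply: leq_mul.
- have sk : size (take k l) = k by rewrite size_take; case: ifP => //; lia.
  case: (eqVneq k 1) => k1.
  + have hs1 : size (S (take k l)) <= 1.
      by apply: leq_trans (size_S_le (take_uniq _ ul)) _; rewrite sk k1.
    rewrite k1 g_small // !size_filter.
    have := count_size (fun A => ~~ hasSP (take 1 l) A) (S (take 1 l)).
    have := count_size (fun A => ~~ hasSQ (take 1 l) A) (S (take 1 l)).
    rewrite -k1; lia.
  + rewrite addn0 count_split; last by rewrite sk; lia.
    * rewrite -{2}sk; apply: IH; [rewrite sk; lia | exact: take_uniq].
    * exact: take_uniq.
- have := IH (drop k l); rewrite size_drop; apply; [lia | exact: drop_uniq].
Qed.


Lemma split_sorted (T : eqType) (key : T -> nat) (A B : pred T) s :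
  sorted (fun x y => key x < key y) s -> (forall x, x \in s -> A x || B x) ->
  (forall a b, A a -> B b -> key a < key b) -> s = filter A s ++ filter B s.
Proof.
have tr : transitive (fun a b => key a < key b) by move=> y a b; exact: ltn_trans.
elim: s => [|x s IH] //= hs cov hAB.
have ss := path_sorted hs.
have IH' := IH ss (fun y ys => cov y ltac:(by rewrite inE ys orbT)) hAB.
have cx := cov x (mem_head x s).
case Ax: (A x) => /=.
- have Bx : B x = false by apply/negP => Bx; have := hAB _ _ Ax Bx; rewrite ltnn.
  by rewrite Bx /= -IH'.
- rewrite Ax /= in cx; rewrite cx.
  have /allP allx := order_path_min tr hs.
  have -> : filter A s = [::].
    apply/eqP; rewrite -[filter A s == [::]]negbK -has_filter; apply/hasPn => y ys.
    apply/negP => Ay; have := hAB _ _ Ay cx; have := allx y ys; rewrite /=; lia.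
  have -> // : filter B s = s.
  apply/all_filterP/allP => y ys; have := cov y ltac:(by rewrite inE ys orbT).
  case/orP => // Ay; have := hAB _ _ Ay cx; have := allx y ys; rewrite /=; lia.
Qed.

Lemma core_P (T : eqType) (s s1 s2 t t1 t2 : seq T) : s = s1 ++ s2 -> t = t1 ++ t2 ->
  size t1 = size s1 -> 0 < size s1 -> 0 < size s2 -> Sep s1 t1 -> Sep s2 t2 -> Sep s t.
Proof.
move=> -> -> e p1 p2 h1 h2; apply: (@SepP _ _ _ (size s1)).
- rewrite size_cat; lia.
- by rewrite take_size_cat // take_size_cat.
- by rewrite drop_size_cat // drop_size_cat.
Qed.

Lemma core_Q (T : eqType) (s s1 s2 t t1 t2 : seq T) : s = s1 ++ s2 -> t = t2 ++ t1 ->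
  size t1 = size s1 -> size t2 = size s2 -> 0 < size s1 -> 0 < size s2 ->
  Sep s1 t1 -> Sep s2 t2 -> Sep s t.
Proof.
move=> -> -> e1 e2 p1 p2 h1 h2; apply: (@SepQ _ _ _ (size s1)).
- rewrite size_cat; lia.
- by rewrite size_cat addKn take_size_cat // drop_size_cat.
- by rewrite size_cat addKn drop_size_cat // take_size_cat.
Qed.

Section Rank.
Variable m : nat.
Definition rank (v : {perm 'I_m}) : seq 'I_m := [seq (v^-1)%g i | i <- enum 'I_m].

Lemma rank_uniq v : uniq (rank v).
Proof. by rewrite map_inj_uniq ?enum_uniq //; exact: perm_inj. Qed.

Lemma mem_rank v x : x \in rank v.
Proof. by apply/mapP; exists (v x); [rewrite mem_enum | rewrite permK]. Qed.

Lemma size_rank v : size (rank v) = m.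
Proof. by rewrite size_map size_enum_ord. Qed.

Lemma rank_sorted (v : {perm 'I_m}) : sorted (fun a b : 'I_m => v a < v b) (rank v).
Proof.
rewrite sorted_map.
have h : sorted (relpre val ltn) (enum 'I_m) by rewrite -sorted_map val_enum_ord iota_ltn_sorted.
apply: sub_sorted h => a b /=; by rewrite !permKV.
Qed.

Lemma rank_inj : injective rank.
Proof.
move=> v w e; have h := proj2 (eq_in_map _ _ _) e.
apply: invg_inj; apply/permP => i; apply: h; by rewrite mem_enum.
Qed.

Lemma all_aboveE (v : vote m) A B : all_above v A B -> forall a b, a \in A -> b \in B -> v a < v b.
Proof. move/forall_inP=> h a b ha hb; by move/forall_inP: (h a ha) => /(_ b hb). Qed.

Lemma sep_of_gs (v w : {perm 'I_m})
  (H : forall C' : {set 'I_m}, 1 < #|C'| -> exists C1 : {set 'I_m},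
     [/\ C1 \subset C', C1 != set0, C' :\: C1 != set0,
         all_above v C1 (C' :\: C1) || all_above v (C' :\: C1) C1 &
         all_above w C1 (C' :\: C1) || all_above w (C' :\: C1) C1]) :
  Sep (rank v) (rank w).
Proof.
have trv : transitive (fun a b : 'I_m => v a < v b) by move=> y a b; exact: ltn_trans.
have trw : transitive (fun a b : 'I_m => w a < w b) by move=> y a b; exact: ltn_trans.
suff claim : forall s, sorted (fun a b : 'I_m => v a < v b) s -> Sep s [seq x <- rank w | x \in s].
  have := claim _ (rank_sorted v).
  have -> // : [seq x <- rank w | x \in rank v] = rank w.
  by apply/all_filterP/allP => x _; apply: mem_rank.
have small : forall s, size s <= 1 -> Sep s [seq x <- rank w | x \in s].
  move=> s; case: s => [|x [|]] // _.
  - have -> : [seq x <- rank w | x \in [::]] = [::].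
      by rewrite (@eq_filter _ _ pred0) ?filter_pred0 // => y; rewrite in_nil.
    exact: SepB.
  - have -> : [seq y <- rank w | y \in [:: x]] = [:: x].
      rewrite (@eq_filter _ _ (pred1 x)); first by rewrite filter_pred1_uniq ?rank_uniq ?mem_rank.
      by move=> y; rewrite mem_seq1.
    exact: SepB.
move=> s; move: {2}(size s) (leqnn (size s)) => N; elim: N s => [|N IH] s hN ss;
  case: (leqP (size s) 1) => hs; try exact: small; first lia.
have us : uniq s := sorted_uniq trv (fun a => ltnn _) ss.
pose C' := [set x in s].
have cC : #|C'| = size s by rewrite cardsE; apply/card_uniqP.
have [C1 [sub ne1 ne2 hv hw]] := H C' ltac:(by rewrite cC).
have core : forall A B : {set 'I_m}, (forall x, x \in s -> (x \in A) || (x \in B)) ->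
    (exists2 a, a \in s & a \in A) -> (exists2 b, b \in s & b \in B) ->
    all_above v A B -> all_above w A B || all_above w B A ->
    Sep s [seq x <- rank w | x \in s].
  move=> A B cov [a as_ aA] [b bs bB] hAB hw'.
  pose s1 := [seq x <- s | x \in A]; pose s2 := [seq x <- s | x \in B].
  have es : s = s1 ++ s2.
    exact: (@split_sorted _ (fun x => v x) (fun x => x \in A) (fun x => x \in B) s ss cov (all_aboveE hAB)).
  pose t := [seq x <- rank w | x \in s].
  have st : sorted (fun a b => w a < w b) t := sorted_filter trw _ (rank_sorted w).
  have covt : forall x, x \in t -> (x \in A) || (x \in B).
    by move=> x; rewrite mem_filter => /andP[/cov].
  have e1 : [seq x <- t | x \in A] = [seq x <- rank w | x \in s1].
    by rewrite /t -filter_predI; apply: eq_filter => x /=; rewrite mem_filter.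
  have e2 : [seq x <- t | x \in B] = [seq x <- rank w | x \in s2].
    by rewrite /t -filter_predI; apply: eq_filter => x /=; rewrite mem_filter.
  have sz1 : size [seq x <- rank w | x \in s1] = size s1.
    apply: perm_size; apply: uniq_perm; [exact: filter_uniq (rank_uniq w) | exact: filter_uniq |].
    by move=> x; rewrite mem_filter mem_rank andbT.
  have sz2 : size [seq x <- rank w | x \in s2] = size s2.
    apply: perm_size; apply: uniq_perm; [exact: filter_uniq (rank_uniq w) | exact: filter_uniq |].
    by move=> x; rewrite mem_filter mem_rank andbT.
  have p1 : 0 < size s1.
    have : a \in s1 by rewrite mem_filter aA as_.
    by case: (s1).
  have p2 : 0 < size s2.
    have : b \in s2 by rewrite mem_filter bB bs.
    by case: (s2).
  have hs12 : size s = size s1 + size s2 by rewrite {1}es size_cat.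
  have l1 : size s1 <= N by move: hN p2 hs12; clearbody s1 s2; clear; lia.
  have l2 : size s2 <= N by move: hN p1 hs12; clearbody s1 s2; clear; lia.
  have IH1 : Sep s1 [seq x <- rank w | x \in s1].
    by apply: IH => //; apply: (sorted_filter trv).
  have IH2 : Sep s2 [seq x <- rank w | x \in s2].
    by apply: IH => //; apply: (sorted_filter trv).
  case/orP: hw' => hw'.
  - apply: (core_P es _ sz1 p1 p2 IH1 IH2); rewrite -e1 -e2.
    exact: (@split_sorted _ (fun x => w x) (fun x => x \in A) (fun x => x \in B) t st covt (all_aboveE hw')).
  - apply: (core_Q es _ sz1 sz2 p1 p2 IH1 IH2); rewrite -e1 -e2.
    apply: (@split_sorted _ (fun x => w x) (fun x => x \in B) (fun x => x \in A) t st _ (all_aboveE hw')).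
    by move=> x /covt; rewrite orbC.
have cov1 : forall x, x \in s -> (x \in C1) || (x \in C' :\: C1).
  by move=> x xs; rewrite !inE xs andbT; case: (x \in C1).
have ex1 : exists2 a, a \in s & a \in C1.
  move/set0Pn: ne1 => [a aC1]; exists a => //; have := subsetP sub a aC1; by rewrite inE.
have ex2 : exists2 b, b \in s & b \in C' :\: C1.
  move/set0Pn: ne2 => [b bC2]; exists b => //; by move: bC2; rewrite !inE => /andP[_].
case/orP: hv => hv.
- exact: (core C1 (C' :\: C1) cov1 ex1 ex2 hv hw).
- apply: (core (C' :\: C1) C1 _ ex2 ex1 hv); last by rewrite orbC.
  by move=> x /cov1; rewrite orbC.
Qed.

End Rank.

Import Order.TTheory GRing.Theory Num.Theory.
Local Open Scope ring_scope.

Section Real.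
Variable R : rcfType.

Lemma conv_eq (f : nat -> R) N :
  \sum_(2 <= m < N.+2) \sum_(1 <= k < m) f k * f (m - k)%N =
  \sum_(1 <= k < N.+1) f k * \sum_(1 <= j < N.+2 - k) f j.
Proof.
elim: N => [|N IH]; first by rewrite !big_geq.
rewrite big_nat_recr //= IH.
transitivity (\sum_(1 <= k < N.+2) (f k * \sum_(1 <= j < N.+2 - k) f j + f k * f (N.+2 - k)%N)).
  rewrite big_split /= [in RHS]big_nat_recr //= (subSnn N.+1) (big_geq (leqnn 1)) mulr0 addr0.
  by [].
apply: eq_big_nat => k /andP[k1 k2].
rewrite (@subSn k N.+2); last by lia.
rewrite big_nat_recr /=; last by lia.
by rewrite mulrDr.
Qed.

Definition a (x : R) m := (g m)%:R * x ^+ m.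

Lemma a_rec x m : (1 < m)%N -> a x m = \sum_(1 <= k < m) a x k * a x (m - k)%N + x * a x m.-1.
Proof.
case: m => // m hm; rewrite /a g_rec // natr_sum mulr_suml.
under eq_bigr => k _ do rewrite natrM natrD.
rewrite (big_ltn hm) (big_ltn hm) g_small // subSS subn0 /=.
rewrite -addrA [X in _ = _ + X]addrC addrA; congr (_ + _).
  by rewrite exprS expr1; ring.
apply: eq_big_nat => k /andP[k2 km].
rewrite (_ : (k == 1)%N = false); last by apply/eqP; lia.
have -> : x ^+ m.+1 = x ^+ k * x ^+ (m.+1 - k)%N by rewrite -exprD subnKC // ltnW.
rewrite /= addr0; ring.
Qed.

Lemma T_le x s : 0 <= x -> x <= s -> x + s * s + x * s <= s ->
  forall N, \sum_(1 <= m < N.+1) a x m <= s.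
Proof.
move=> x0 xs key; have s0 : 0 <= s by apply: le_trans xs.
have a0 : forall m, 0 <= a x m by move=> m; rewrite /a mulr_ge0 // exprn_ge0.
elim=> [|N IH]; first by rewrite big_geq.
have T0 : 0 <= \sum_(1 <= m < N.+1) a x m by apply: sumr_ge0.
set T := \sum_(1 <= m < N.+1) a x m in IH T0.
rewrite (@big_ltn _ _ _ 1 N.+2) // {1}/a g_small // mul1r expr1.
rewrite (@eq_big_nat _ _ _ 2 N.+2 _ (fun m => \sum_(1 <= k < m) a x k * a x (m - k)%N + x * a x m.-1));
  last by move=> m /andP[hm _]; apply: a_rec.
rewrite big_split /= conv_eq -mulr_sumr.
have -> : \sum_(2 <= i < N.+2) a x i.-1 = T by rewrite big_add1.
have conv : \sum_(1 <= k < N.+1) a x k * \sum_(1 <= j < N.+2 - k) a x j <= T * T.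
  rewrite /T mulr_suml; apply: ler_sum_nat => k /andP[k1 kN].
  have inner : \sum_(1 <= j < N.+2 - k) a x j <= T.
    rewrite /T (@big_nat_widen _ _ _ 1 (N.+2 - k) N.+1); last by lia.
    rewrite big_mkcond /=; apply: ler_sum_nat => j _; case: ifP => _; [exact: lexx | exact: a0].
  move: inner; rewrite /T => inner; have := a0 k; nra.
nra.
Qed.


Lemma g_bound m : (g m)%:R <= (3 + 2 * Num.sqrt (2:R)) ^+ m.
Proof.
set t := Num.sqrt (2:R).
have t0 : 0 <= t := sqrtr_ge0 _.
have tt : t * t = 2 by rewrite -expr2 sqr_sqrtr // ler0n.
set c := 3 + 2 * t.
pose x := 3 - 2 * t. pose s := t - 1.
have x0 : 0 <= x by rewrite /x; nra.
have xs : x <= s by rewrite /x /s; nra.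
have key : x + s * s + x * s <= s by rewrite /x /s; nra.
have cx : c * x = 1.
  rewrite /c /x; have -> : (3 + 2 * t) * (3 - 2 * t) = 9 - 4 * (t * t) by ring.
  rewrite tt; ring.
have s1 : s <= 1 by rewrite /s; nra.
have c0 : 0 <= c by rewrite /c; nra.
case: m => [|m]; first by rewrite g_small // expr0.
have h : a x m.+1 <= 1.
  apply: le_trans s1; apply: le_trans (T_le x0 xs key m.+1).
  rewrite big_nat_recr //= lerDr; apply: sumr_ge0 => i _; apply: mulr_ge0 => //; exact: exprn_ge0.
have -> : (g m.+1)%:R = a x m.+1 * c ^+ m.+1.
  by rewrite /a -mulrA -exprMn [x * c]mulrC cx expr1n mulr1.
have := exprn_ge0 m.+1 c0; nra.
Qed.

End Real.

Lemma card_fam (T : finType) n (v : T) (W : pred T) :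
  #|[pred P : {ffun 'I_n.+1 -> T} | P \in family (fun i => if i == ord0 then pred1 v else [pred w | W w])]|
  = (#|[pred w | W w]| ^ n)%N.
Proof.
have := card_family (fun i : 'I_n.+1 => if i == ord0 then pred1 v else [pred w | W w]).
rewrite foldrE big_map big_enum /=.
rewrite big_ord_recl /= card1 mul1n.
rewrite prod_nat_const card_ord => <-. apply: eq_card => P. by rewrite !inE.
Qed.

Lemma leq_expm (a b e : nat) : (a <= b)%N -> (a ^ e <= b ^ e)%N.
Proof. by case: e => [|e] // h; rewrite leq_exp2r. Qed.

Lemma count_bound n m : (1 <= n)%N -> (num_gs n m <= m`! * g m ^ (n - 1))%N.
Proof.
case: n => // n _; rewrite subn1 /=.
pose W (v : vote m) := [pred w : vote m | sepb (rank v) (rank w)].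
have hW : forall v : vote m, (#|W v| <= g m)%N.
  move=> v.
  have u : uniq [seq rank w | w in W v].
    by rewrite map_inj_uniq ?enum_uniq //; exact: rank_inj.
  have sub : {subset [seq rank w | w in W v] <= S (rank v)}.
    by move=> y /imageP[w wW ->]; rewrite mem_S.
  have := S_bound (rank_uniq v); rewrite size_rank; apply: leq_trans.
  rewrite -(size_image (@rank m) (W v)); exact: uniq_leq_size u sub.
pose X := [pred P : election n.+1 m | [forall i, P i \in W (P ord0)]].
have s1 : (num_gs n.+1 m <= #|X|)%N.
  rewrite /num_gs; apply: subset_leq_card; apply/subsetP => P; rewrite inE => gs.
  rewrite inE; apply/forallP => i; rewrite inE.
  apply/sepbP; apply: sep_of_gs => C' hC'.
  move/forallP: gs => /(_ C') /implyP /(_ hC') /existsP [C1 /and4P[h1 h2 h3 /forallP h4]].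
  by exists C1; split => //.
have s2 : #|X| = (\sum_(v : vote m) #|[pred P : election n.+1 m | (P \in X) && (P ord0 == v)]|)%N.
  rewrite -sum1_card (partition_big (fun P : election n.+1 m => P ord0) predT) //=.
  apply: eq_bigr => v _; rewrite -sum1_card; apply: eq_bigl => P; by rewrite inE.
have s3 : forall v, (#|[pred P : election n.+1 m | (P \in X) && (P ord0 == v)]| <= #|W v| ^ n)%N.
  move=> v; have fam := card_fam n v (W v).
  have -> : #|W v| = #|[pred w | W v w]| by apply: eq_card.
  rewrite -fam; apply: subset_leq_card; apply/subsetP => P; rewrite !inE => /andP[hX /eqP h0].
  apply/familyP => i; case: ifP => [/eqP -> | _]; first by rewrite inE h0.
  by move/forallP: hX => /(_ i); rewrite h0 !inE.
apply: (leq_trans s1); rewrite s2.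
apply: (@leq_trans (\sum_(v : vote m) g m ^ n)%N).
  by apply: leq_sum => v _; apply: leq_trans (s3 v) (leq_expm _ (hW v)).
by rewrite sum_nat_const card_Sn.
Qed.

Theorem mainTheorem6 (R : rcfType) (n m : nat) (hn : (2 <= n)%N) (hm : (2 <= m)%N) :
  (num_gs n m)%:R <= (m`!)%:R * (3 + 2 * Num.sqrt (2 : R)) ^+ (m * (n - 1)) :> R.
Proof.
have hnat := count_bound m (leq_trans (isT : (1 <= 2)%N) hn).
apply: le_trans (_ : ((m`! * g m ^ (n - 1))%N)%:R <= _); first by rewrite ler_nat.
rewrite natrM natrX exprM.
have hb := g_bound R m.
have hp : (g m)%:R ^+ (n - 1) <= ((3 + 2 * Num.sqrt (2 : R)) ^+ m) ^+ (n - 1).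
  by apply: lerXn2r => //; rewrite nnegrE // (le_trans _ hb).
have f0 : 0 <= (m`!)%:R :> R by rewrite ler0n.
nra.
Qed.
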